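(* Let $S$ be a finite set of distinct lines in the plane, each having one of three distinct slopes. Consider the greedy algorithm that first repeatedly chooses (in any order) a point lying on three not-yet-hit lines of $S$ (necessarily one of each slope) and marks these three lines as hit, until no such point exists; and then, on the remaining unhit lines (no three of which are concurrent), repeatedly chooses a point at which two unhit lines cross, taking the two lines from the two slope classes currently having the largest numbers of unhit lines, and marks them as hit, until no two unhit lines cross; and finally places one point on each remaining unhit line. The number of points chosen by this algorithm is at most $\frac{7}{5}$ times the minimum cardinality of a hitting set for $S$.
   Context: A hitting set for a set of lines is a finite set of points such that every line contains at least one of the points. *)

(* Defs.v *)
From HB Require Import structures.
From mathcomp Require Import all_boot all_order all_algebra.
Set Implicit Arguments. Unset Strict Implicit. Unset Printing Implicit Defensive.
Import Order.TTheory GRing.Theory Num.Theory.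
Local Open Scope ring_scope.

Definition point (R : realFieldType) := (R * R)%type.

(* A line  { p | la * p.1 + lb * p.2 = lc }  with (la, lb) <> (0, 0). *)
Record line (R : realFieldType) := Line {
  la : R; lb : R; lc : R;
  line_nondeg : (la != 0) || (lb != 0) }.

Definition on_line (R : realFieldType) (l : line R) (p : point R) : bool :=
  la l * p.1 + lb l * p.2 == lc l.

Definition parallel_to (R : realFieldType) (l : line R) (d : R * R) : bool :=
  la l * d.1 + lb l * d.2 == 0.

Definition non_parallel (R : realFieldType) (d e : R * R) : bool :=
  d.1 * e.2 - d.2 * e.1 != 0.

(* The lines of S are L i, i : 'I_n.  Line i is hit by the points ps. *)
Definition hit (R : realFieldType) (n : nat) (L : 'I_n -> line R)
  (ps : seq (point R)) (i : 'I_n) : bool := has (on_line (L i)) ps.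

Definition hitting_set (R : realFieldType) (n : nat) (L : 'I_n -> line R)
  (H : seq (point R)) : Prop := forall i, hit L H i.

Definition unhit_count (R : realFieldType) (n : nat) (L : 'I_n -> line R)
  (d : 'I_3 -> R * R) (ps : seq (point R)) (c : 'I_3) : nat :=
  #|[set i | ~~ hit L ps i & parallel_to (L i) (d c)]|.

Definition phase1_step (R : realFieldType) (n : nat) (L : 'I_n -> line R)
  (pre : seq (point R)) (p : point R) : Prop :=
  exists i j k : 'I_n,
    [/\ [&& i != j, j != k & i != k],
        [&& ~~ hit L pre i, ~~ hit L pre j & ~~ hit L pre k] &
        [&& on_line (L i) p, on_line (L j) p & on_line (L k) p]].

Definition phase1 (R : realFieldType) (n : nat) (L : 'I_n -> line R)
  (ps1 : seq (point R)) : Prop :=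
  (forall k, (k < size ps1)%N ->
     phase1_step L (take k ps1) (nth (0, 0) ps1 k)) /\
  ~ (exists p, phase1_step L ps1 p).

Definition phase2_step (R : realFieldType) (n : nat) (L : 'I_n -> line R)
  (d : 'I_3 -> R * R) (pre : seq (point R)) (p : point R) : Prop :=
  exists (i j : 'I_n) (a b : 'I_3),
    [/\ a != b,
        ~~ hit L pre i /\ ~~ hit L pre j,
        parallel_to (L i) (d a) /\ parallel_to (L j) (d b),
        on_line (L i) p /\ on_line (L j) p &
        forall c : 'I_3, c != a -> c != b ->
          (unhit_count L d pre c <= unhit_count L d pre a)%N /\
          (unhit_count L d pre c <= unhit_count L d pre b)%N].

Definition phase2 (R : realFieldType) (n : nat) (L : 'I_n -> line R)
  (d : 'I_3 -> R * R) (pre ps2 : seq (point R)) : Prop :=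
  (forall k, (k < size ps2)%N ->
     phase2_step L d (pre ++ take k ps2) (nth (0, 0) ps2 k)) /\
  ~ (exists (i j : 'I_n) (p : point R),
       [/\ i != j, ~~ hit L (pre ++ ps2) i, ~~ hit L (pre ++ ps2) j,
           on_line (L i) p & on_line (L j) p]).

Definition phase3 (R : realFieldType) (n : nat) (L : 'I_n -> line R)
  (pre ps3 : seq (point R)) : Prop :=
  (forall i, ~~ hit L pre i -> hit L ps3 i) /\
  size ps3 = #|[set i | ~~ hit L pre i]|.

Definition greedy_run (R : realFieldType) (n : nat) (L : 'I_n -> line R)
  (d : 'I_3 -> R * R) (ps : seq (point R)) : Prop :=
  exists ps1 ps2 ps3 : seq (point R),
    [/\ ps = ps1 ++ ps2 ++ ps3, phase1 L ps1, phase2 L d ps1 ps2 &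
        phase3 L (ps1 ++ ps2) ps3].

(* Main.v *)
Require Import Defs.
From HB Require Import structures.
From mathcomp Require Import all_boot all_order all_algebra.
From mathcomp Require Import zify ring lra.
Set Implicit Arguments. Unset Strict Implicit. Unset Printing Implicit Defensive.
Import Order.TTheory GRing.Theory Num.Theory.
Local Open Scope ring_scope.

Section Geo.
Variable R : realFieldType.

Lemma nz2 (a b : R) : (a != 0) || (b != 0) -> a = 0 -> b = 0 -> False.
Proof. by move=> /orP[] /eqP. Qed.

Lemma kern (a b v1 v2 w1 w2 : R) : (a != 0) || (b != 0) -> (v1 != 0) || (v2 != 0) ->
  a * v1 + b * v2 = 0 ->
  (a * w1 + b * w2 == 0) = (w1 * v2 - w2 * v1 == 0).
Proof.
move=> hab hv e.
have E1 : (a * w1 + b * w2) * v1 + b * (w1 * v2 - w2 * v1) = 0.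
  by rewrite -(mulr0 w1) -e; ring.
have E2 : (a * w1 + b * w2) * v2 - a * (w1 * v2 - w2 * v1) = 0.
  by rewrite -(mulr0 w2) -e; ring.
apply/eqP/eqP => [X|D].
  move/eqP: E1; move/eqP: E2; rewrite X !mul0r !add0r ?sub0r ?oppr_eq0 !mulf_eq0.
  case/orP => [/eqP a0|/eqP //]; case/orP => [/eqP b0|/eqP //].
  by case: (nz2 hab a0 b0).
move/eqP: E1; move/eqP: E2; rewrite D !mulr0 !addr0 ?subr0 ?oppr0 !mulf_eq0.
case/orP => [/eqP //|/eqP v20]; case/orP => [/eqP //|/eqP v10].
by case: (nz2 hv v10 v20).
Qed.

Lemma online_sub (l : line R) (p q : point R) : on_line l p ->
  on_line l q = (la l * (q.1 - p.1) + lb l * (q.2 - p.2) == 0).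
Proof. by rewrite /on_line => /eqP e; rewrite -{1}e -subr_eq0; congr (_ == 0); ring. Qed.

Lemma same_pts (l l' : line R) (v : R * R) (p : point R) :
  (v.1 != 0) || (v.2 != 0) -> parallel_to l v -> parallel_to l' v ->
  on_line l p -> on_line l' p -> forall q, on_line l q = on_line l' q.
Proof.
move=> hv /eqP e /eqP e' hp hp' q.
rewrite (online_sub q hp) (online_sub q hp').
by rewrite (kern _ _ (line_nondeg l) hv e) (kern _ _ (line_nondeg l') hv e').
Qed.

Lemma no_two_dirs (l : line R) (v w : R * R) :
  parallel_to l v -> parallel_to l w -> non_parallel v w -> False.
Proof.
rewrite /parallel_to /non_parallel => /eqP e /eqP f hD.
have E1 : la l * (v.1 * w.2 - v.2 * w.1) = w.2 * (la l * v.1 + lb l * v.2) - v.2 * (la l * w.1 + lb l * w.2) by ring.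
have E2 : lb l * (v.1 * w.2 - v.2 * w.1) = v.1 * (la l * w.1 + lb l * w.2) - w.1 * (la l * v.1 + lb l * v.2) by ring.
rewrite e f !mulr0 subr0 in E1 E2.
move/eqP: E1; move/eqP: E2; rewrite !mulf_eq0 (negbTE hD) !orbF => /eqP b0 /eqP a0.
exact: (nz2 (line_nondeg l) a0 b0).
Qed.

Lemma nonpar_nz (v w : R * R) : non_parallel v w -> (v.1 != 0) || (v.2 != 0).
Proof.
rewrite /non_parallel; apply: contraTT; rewrite negb_or !negbK => /andP[/eqP -> /eqP ->].
by rewrite !mul0r subrr.
Qed.

Lemma meet (l l' : line R) (v w : R * R) :
  parallel_to l v -> parallel_to l' w -> non_parallel v w ->
  exists p, on_line l p && on_line l' p.
Proof.
move=> hv hw hvw.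
set D := la l * lb l' - lb l * la l'.
have hD : D != 0.
  apply/negP => /eqP D0; apply: (no_two_dirs _ hw hvw).
  move: hv; rewrite /parallel_to => /eqP e.
  set Y := la l' * v.1 + lb l' * v.2.
  have E1 : Y * la l = v.2 * D + la l' * (la l * v.1 + lb l * v.2) by rewrite /Y /D; ring.
  have E2 : Y * lb l = - (v.1 * D) + lb l' * (la l * v.1 + lb l * v.2) by rewrite /Y /D; ring.
  rewrite D0 e !mulr0 oppr0 addr0 in E1 E2.
  move/eqP: E1; move/eqP: E2; rewrite !mulf_eq0.
  case/orP => [/eqP -> //|/eqP b0]; case/orP => [/eqP -> //|/eqP a0].
  by case: (nz2 (line_nondeg l) a0 b0).
exists ((lc l * lb l' - lb l * lc l') / D, (la l * lc l' - lc l * la l') / D).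
rewrite /on_line /=; apply/andP; split; apply/eqP; rewrite /D; field; exact: hD.
Qed.

Lemma two_pts (l l' : line R) (p q : point R) : p != q ->
  on_line l p -> on_line l q -> on_line l' p -> on_line l' q ->
  forall r, on_line l r = on_line l' r.
Proof.
move=> hpq hp hq hp' hq'.
have hv : ((p - q).1 != 0) || ((p - q).2 != 0).
  move: hpq; clear; case: p => p1 p2; case: q => q1 q2 /=.
  apply: contraNT; rewrite negb_or !negbK !subr_eq0 => /andP[/eqP -> /eqP ->] //.
apply: (same_pts hv _ _ hq hq').
  by rewrite /parallel_to -(online_sub _ hq).
by rewrite /parallel_to -(online_sub _ hq').
Qed.
End Geo.

Section Main.
Local Open Scope nat_scope.
Variables (R : realFieldType) (n : nat) (d : 'I_3 -> R * R).
Hypothesis hd : forall a b : 'I_3, a != b -> non_parallel (d a) (d b).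
Variable L : 'I_n -> line R.
Hypothesis hL : forall i j : 'I_n,
          (forall p : point R, on_line (L i) p = on_line (L j) p) -> i = j.
Hypothesis hS : forall i : 'I_n, exists a : 'I_3, parallel_to (L i) (d a).

Definition o0 : 'I_3 := Ordinal (isT : (0 < 3)%N).
Definition o1 : 'I_3 := Ordinal (isT : (1 < 3)%N).
Definition o2 : 'I_3 := Ordinal (isT : (2 < 3)%N).

Lemma ord3 (x : 'I_3) : x = o0 \/ x = o1 \/ x = o2.
Proof.
case: x => [[|[|[|m]]] hm].
- by left; apply: val_inj.
- by right; left; apply: val_inj.
- by right; right; apply: val_inj.
- by [].
Qed.

Definition on_ (p : point R) := [set i : 'I_n | on_line (L i) p].
Definition cls (c : 'I_3) := [set i : 'I_n | parallel_to (L i) (d c)].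
Definition U (pre : seq (point R)) := [set i : 'I_n | ~~ hit L pre i].

Lemma dnz c : ((d c).1 != 0%R) || ((d c).2 != 0%R).
Proof.
have [c' hc'] : exists c', c != c'.
  case: (ord3 c) => [->|[->|->]]; [exists o1|exists o0|exists o0]; by [].
exact: nonpar_nz (hd hc').
Qed.

Lemma cls_uniq i a b : i \in cls a -> i \in cls b -> a = b.
Proof.
rewrite !inE => ha hb; apply/eqP; apply/negP => /negP hab.
exact: (no_two_dirs ha hb (hd hab)).
Qed.

Lemma cls_ex i : exists c, i \in cls c.
Proof. by case: (hS i) => c hc; exists c; rewrite inE. Qed.

Lemma same_cls_pt i j c p : i \in cls c -> j \in cls c ->
  on_line (L i) p -> on_line (L j) p -> i = j.
Proof.
rewrite !inE => hi hj hpi hpj; apply: hL.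
exact: (same_pts (dnz c) hi hj hpi hpj).
Qed.

Lemma cls_pt_le1 (A : {set 'I_n}) c p : #|A :&: cls c :&: on_ p| <= 1.
Proof.
apply/card_le1_eqP => i j; rewrite !in_setI => /andP[/andP[_ hi] pi] /andP[/andP[_ hj] pj].
rewrite inE in pi; rewrite inE in pj.
by rewrite (same_cls_pt hi hj pi pj).
Qed.

Lemma partition_card (A : {set 'I_n}) :
  #|A| = #|A :&: cls o0| + #|A :&: cls o1| + #|A :&: cls o2|.
Proof.
rewrite -(cardsID (cls o0) A) -addnA; congr (_ + _).
rewrite -(cardsID (cls o1) (A :\: cls o0)).
have -> : (A :\: cls o0) :&: cls o1 = A :&: cls o1.
  apply/setP => i; rewrite !in_setI !in_setD.
  case h1: (i \in cls o1); rewrite ?andbF ?andbT //.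
  case h0: (i \in cls o0) => //.
  by have := cls_uniq h0 h1.
have -> // : (A :\: cls o0) :\: cls o1 = A :&: cls o2.
apply/setP => i; rewrite !in_setI !in_setD.
  case: (cls_ex i) => c hc.
  case: (ord3 c) hc => [->|[->|->]] hc.
  + rewrite hc /=; case h2: (i \in cls o2); rewrite ?andbF //; by have := cls_uniq hc h2.
  + rewrite hc /=; case h2: (i \in cls o2); rewrite ?andbF //; by have := cls_uniq hc h2.
  + rewrite hc andbT.
    case h0: (i \in cls o0); first by have := cls_uniq h0 hc.
    case h1: (i \in cls o1); first by have := cls_uniq h1 hc.
    by [].
Qed.


Lemma cover (H : seq (point R)) (A : {set 'I_n}) :
  (forall i, i \in A -> hit L H i) -> #|A| <= \sum_(p <- H) #|A :&: on_ p|.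
Proof.
elim: H A => [|p H IH] A hA.
  rewrite big_nil leqn0 cards_eq0; apply/eqP/setP => i; rewrite inE.
  by apply/negP => /hA.
rewrite big_cons -(cardsID (on_ p) A) leq_add2l.
apply: leq_trans (IH _ _) _.
  move=> i; rewrite in_setD inE => /andP[hn hi].
  by move: (hA i hi); rewrite /hit /= (negbTE hn).
apply: leq_sum => q _; apply: subset_leq_card; apply: setSI; exact: subsetDl.
Qed.

Lemma sum_le_const (H : seq (point R)) (f : point R -> nat) k :
  (forall p, f p <= k) -> \sum_(p <- H) f p <= k * size H.
Proof.
move=> hf; elim: H => [|p H IH]; first by rewrite big_nil.
by rewrite big_cons /= mulnS leq_add.
Qed.

Lemma U_rcons pre p : U (rcons pre p) = U pre :\: on_ p.
Proof.
apply/setP => i; rewrite !inE /hit has_rcons negb_or andbC.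
by [].
Qed.

Lemma U_nil : U [::] = setT.
Proof. by apply/setP => i; rewrite !inE. Qed.

Lemma U_cat_sub s1 s2 : U (s1 ++ s2) \subset U s1.
Proof. apply/subsetP => i; rewrite !inE /hit has_cat negb_or => /andP[] //. Qed.

Lemma step_card pre p c :
  #|U pre :&: cls c| = #|U (rcons pre p) :&: cls c| + #|U pre :&: cls c :&: on_ p|.
Proof.
rewrite -(cardsID (on_ p) (U pre :&: cls c)) addnC.
have -> // : (U pre :&: cls c) :\: on_ p = U (rcons pre p) :&: cls c.
apply/setP => i; rewrite U_rcons !in_setI !in_setD.
by rewrite in_setI andbA.
Qed.

Lemma unhitE pre c : unhit_count L d pre c = #|U pre :&: cls c|.
Proof. by rewrite /unhit_count; apply: eq_card => i; rewrite !inE. Qed.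

Lemma distinct_classes i j k p ci cj ck :
  i != j -> j != k -> i != k ->
  on_line (L i) p -> on_line (L j) p -> on_line (L k) p ->
  i \in cls ci -> j \in cls cj -> k \in cls ck ->
  forall c, c = ci \/ c = cj \/ c = ck.
Proof.
move=> ij jk ik pi pj pk hi hj hk c.
have dij : ci != cj by apply/eqP => e; move: hj; rewrite -e => hj; rewrite (same_cls_pt hi hj pi pj) eqxx in ij.
have djk : cj != ck by apply/eqP => e; move: hk; rewrite -e => hk; rewrite (same_cls_pt hj hk pj pk) eqxx in jk.
have dik : ci != ck by apply/eqP => e; move: hk; rewrite -e => hk; rewrite (same_cls_pt hi hk pi pk) eqxx in ik.
move: dij djk dik; clear hi hj hk; rewrite -!(inj_eq val_inj).
case: c ci cj ck => [c hc] [x hx] [y hy] [z hz] /= h1 h2 h3.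
have : c = x \/ c = y \/ c = z by lia.
by case=> [e|[e|e]]; [left|right;left|right;right]; apply: val_inj.
Qed.

Lemma phase1_card pre p : phase1_step L pre p -> forall c, #|U pre :&: cls c :&: on_ p| = 1.
Proof.
case=> i [j [k [/and3P[ij jk ik] /and3P[hi hj hk] /and3P[pi pj pk]]]] c.
apply/eqP; rewrite eqn_leq cls_pt_le1 /=; apply/card_gt0P.
case: (cls_ex i) => ci ci'; case: (cls_ex j) => cj cj'; case: (cls_ex k) => ck ck'.
case: (distinct_classes ij jk ik pi pj pk ci' cj' ck' c) => [->|[->|->]].
- by exists i; rewrite !in_setI ci' !inE hi pi.
- by exists j; rewrite !in_setI cj' !inE hj pj.
- by exists k; rewrite !in_setI ck' !inE hk pk.
Qed.


Lemma phase1_inv ps1 : phase1 L ps1 -> forall c, #|U ps1 :&: cls c| + size ps1 = #|cls c|.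
Proof.
case=> hst _ c.
suff H : forall k, k <= size ps1 -> #|U (take k ps1) :&: cls c| + k = #|cls c|.
  by have := H _ (leqnn _); rewrite take_size.
elim=> [|k IH] hk; first by rewrite take0 U_nil setTI addn0.
have hk' : k < size ps1 by [].
rewrite (take_nth (0%R, 0%R) hk') -(IH (ltnW hk')).
rewrite [#|U (take k ps1) :&: _|](step_card _ (nth (0%R, 0%R) ps1 k)).
rewrite (phase1_card (hst _ hk')).
by rewrite addnS addn1 addSn.
Qed.

Lemma le1' (A : {set 'I_n}) p c : #|A :&: on_ p :&: cls c| <= 1.
Proof. by rewrite setIAC cls_pt_le1. Qed.

Lemma in3 (A : {set 'I_n}) p c : 0 < #|A :&: on_ p :&: cls c| ->
  exists i, [/\ i \in A, on_line (L i) p & i \in cls c].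
Proof.
case/card_gt0P => i; rewrite !in_setI => /andP[/andP[hA hp] hc].
by exists i; rewrite inE in hp.
Qed.

Lemma neq_cls i j a b : i \in cls a -> j \in cls b -> a != b -> i != j.
Proof. by move=> hi hj hab; apply/eqP => e; rewrite e in hi; rewrite (cls_uniq hi hj) eqxx in hab. Qed.

Lemma no_triple ps1 : phase1 L ps1 -> forall p, #|U ps1 :&: on_ p| <= 2.
Proof.
case=> _ hno p; rewrite partition_card.
have h0 := le1' (U ps1) p o0; have h1 := le1' (U ps1) p o1; have h2 := le1' (U ps1) p o2.
rewrite leqNgt; apply/negP => hgt.
move: h0 h1 h2 hgt.
set x0 := #|U ps1 :&: on_ p :&: cls o0|; set x1 := #|U ps1 :&: on_ p :&: cls o1|; set x2 := #|U ps1 :&: on_ p :&: cls o2|.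
move=> h0 h1 h2 hgt.
have a0 : 0 < x0 by clearbody x0 x1 x2; lia.
have a1 : 0 < x1 by clearbody x0 x1 x2; lia.
have a2 : 0 < x2 by clearbody x0 x1 x2; lia.
case: (in3 a0) => i [hi pi ci]; case: (in3 a1) => j [hj pj cj]; case: (in3 a2) => k [hk pk ck].
rewrite !inE in hi hj hk.
apply: hno; exists p, i, j, k; split.
- by rewrite (neq_cls ci cj) ?(neq_cls cj ck) ?(neq_cls ci ck).
- by rewrite hi hj hk.
- by rewrite pi pj pk.
Qed.

Definition gg (u0 u1 u2 : nat) := maxn (maxn u0 u1) (maxn u2 ((u0+u1+u2+1) %/ 2)).

Lemma gstep (f f' : 'I_3 -> nat) a b : a != b ->
  (forall c, f c = f' c + ((c == a) + (c == b))) ->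
  (forall c, c != a -> c != b -> f c <= f a /\ f c <= f b) ->
  gg (f' o0) (f' o1) (f' o2) + 1 <= gg (f o0) (f o1) (f o2).
Proof.
move=> hab e hm.
have e0 := e o0; have e1 := e o1; have e2 := e o2.
rewrite /gg.
case: (ord3 a) hab e0 e1 e2 hm => [->|[->|->]]; case: (ord3 b) => [->|[->|->]] //= _ e0 e1 e2 hm.
- have [] := hm o2 isT isT; lia.
- have [] := hm o1 isT isT; lia.
- have [] := hm o2 isT isT; lia.
- have [] := hm o0 isT isT; lia.
- have [] := hm o1 isT isT; lia.
- have [] := hm o0 isT isT; lia.
Qed.

Definition F pre c := #|U pre :&: cls c|.
Definition G pre := gg (F pre o0) (F pre o1) (F pre o2).

Lemma phase2_step_G ps1 pre p : phase1 L ps1 -> U pre \subset U ps1 ->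
  phase2_step L d pre p -> G (rcons pre p) + 1 <= G pre.
Proof.
case=> _ hno hsub [i [j [a [b [hab [hi hj] [pai pbj] [pi pj] hm]]]]].
have ci : i \in cls a by rewrite inE.
have cj : j \in cls b by rewrite inE.
apply: (@gstep (F pre) (F (rcons pre p)) a b hab); last first.
  by move=> c ca cb; rewrite /F -!unhitE; exact: hm.
move=> c; rewrite /F (step_card pre p c); congr (_ + _).
have hIa : i \in U pre :&: cls c :&: on_ p -> c = a.
  by rewrite !in_setI => /andP[/andP[_ h] _]; exact: cls_uniq h ci.
case: (eqVneq c a) => [->|ca].
  rewrite ?eqxx ?(negbTE hab) /=; apply/eqP; rewrite eqn_leq cls_pt_le1 /=.
  by apply/card_gt0P; exists i; rewrite !in_setI ci !inE hi pi.
case: (eqVneq c b) => [->|cb].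
  rewrite ?eqxx ?(negbTE ca) /=; apply/eqP; rewrite eqn_leq cls_pt_le1 /=.
  by apply/card_gt0P; exists j; rewrite !in_setI cj !inE hj pj.
rewrite ?(negbTE ca) ?(negbTE cb) /= ; apply/eqP; rewrite cards_eq0; apply/eqP/setP => k; rewrite in_set0.
apply/negbTE/negP; rewrite !in_setI => /andP[/andP[hk ck] pk].
rewrite inE in pk.
apply: hno; exists p, i, j, k; split.
- apply/and3P; split; [apply: (neq_cls ci cj) | apply: (neq_cls cj ck) | apply: (neq_cls ci ck)]; by rewrite // eq_sym.
- have hs := subsetP hsub.
  have ui : i \in U ps1 by apply: hs; rewrite inE.
  have uj : j \in U ps1 by apply: hs; rewrite inE.
  have uk : k \in U ps1 by apply: hs.
  by rewrite !inE in ui uj uk; rewrite ui uj uk.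
- by rewrite pi pj pk.
Qed.

Lemma phase2_inv ps1 ps2 : phase1 L ps1 -> phase2 L d ps1 ps2 ->
  size ps2 + G (ps1 ++ ps2) <= G ps1.
Proof.
move=> h1 [hst _].
suff H : forall k, k <= size ps2 -> k + G (ps1 ++ take k ps2) <= G ps1.
  by have := H _ (leqnn _); rewrite take_size.
elim=> [|k IH] hk; first by rewrite take0 cats0.
have hk' : k < size ps2 by [].
rewrite (take_nth (0%R, 0%R) hk') -rcons_cat.
have := phase2_step_G h1 (U_cat_sub _ _) (hst _ hk').
have := IH (ltnW hk').
set x := G _; set y := G _; set z := G _; clearbody x y z; lia.
Qed.

Lemma termination ps1 ps2 : phase2 L d ps1 ps2 -> forall a b, a != b ->
  F (ps1 ++ ps2) a = 0 \/ F (ps1 ++ ps2) b = 0.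
Proof.
case=> _ hno a b hab.
case: (posnP (F (ps1 ++ ps2) a)) => [->|pa]; first by left.
right; apply/eqP; rewrite cards_eq0; apply: contraT => /set0Pn [j hj].
case/card_gt0P: pa => i hi.
rewrite in_setI inE in hi; case/andP: hi => hi ci.
rewrite in_setI inE in hj; case/andP: hj => hj cj.
have ci' := ci; have cj' := cj; rewrite inE in ci'; rewrite inE in cj'.
case: (meet ci' cj' (hd hab)) => p /andP[pi pj].
case: hno; exists i, j, p; split => //.
exact: (neq_cls ci cj hab).
Qed.

Lemma LBcls H c : hitting_set L H -> #|cls c| <= size H.
Proof.
move=> hH; apply: leq_trans (cover (A := cls c) (fun i _ => hH i)) _.
rewrite -[size H]mul1n; apply: sum_le_const => p.
by have := cls_pt_le1 setT c p; rewrite setTI.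
Qed.

Lemma LB2 ps1 H : phase1 L ps1 -> hitting_set L H -> #|U ps1| <= 2 * size H.
Proof.
move=> h1 hH; apply: leq_trans (cover (A := U ps1) (fun i _ => hH i)) _.
by apply: sum_le_const => p; exact: no_triple.
Qed.


Ltac crunch := repeat match goal with |- context[#|?A|] => let x := fresh "x" in set x := #|A|; clearbody x end; lia.

Lemma special ps1 H : phase1 L ps1 -> size ps1 = 1 -> #|U ps1| = 3 ->
  hitting_set L H -> 3 <= size H.
Proof.
case: ps1 => [|g [|? ?]] //= h1 _ hU3 hH.
have h1' := h1; case: h1' => hst _.
have hst0 : phase1_step L [::] g by exact: (hst 0 isT).
have hon : #|on_ g| = 3.
  rewrite partition_card.
  have := phase1_card hst0; rewrite U_nil => e.
  have e' : forall c, #|on_ g :&: cls c| = 1.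
    by move=> c; rewrite setIC -[cls c :&: on_ g]setTI setIA e.
  by rewrite !e'.
have hUg : #|U [:: g] :&: on_ g| = 0.
  apply/eqP; rewrite cards_eq0; apply/eqP/setP => i; rewrite in_set0 !inE /hit /=.
  by case: (on_line (L i) g).
have hpq : forall p, p != g -> #|on_ g :&: on_ p| <= 1.
  move=> p hp; apply/card_le1_eqP => i j; rewrite !inE => /andP[ig ip] /andP[jg jp].
  by apply: hL; apply: (two_pts hp) => //.
have hU2 := no_triple h1.
have c1 := cover (A := on_ g) (fun i _ => hH i).
have c2 := cover (A := U [:: g]) (fun i _ => hH i).
rewrite hon in c1; rewrite hU3 in c2.
case: H hH c1 c2 => [|p [|q [|r H']]] //= hH; rewrite ?big_nil ?big_cons ?big_nil //.
- move=> _ c2; move: c2 (hU2 p); crunch.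
- move=> c1 c2.
  case: (eqVneq p g) => [epg|npg].
    rewrite epg hUg in c2; move: c2 (hU2 q); crunch.
  case: (eqVneq q g) => [eqg|nqg].
    rewrite eqg hUg in c2; move: c2 (hU2 p); crunch.
  move: c1 (hpq _ npg) (hpq _ nqg); crunch.
Qed.

Lemma fin t m0 m1 m2 h s : t + m0 <= h -> t + m1 <= h -> t + m2 <= h -> m0+m1+m2 <= 2*h ->
  (t = 1 -> m0 = 1 -> m1 = 1 -> m2 = 1 -> 3 <= h) ->
  s <= gg m0 m1 m2 -> 5 * (t + s) <= 7 * h.
Proof. rewrite /gg => h0 h1 h2 hM hsp hs.
have : s <= m0 \/ s <= m1 \/ s <= m2 \/ 2 * s <= m0+m1+m2+1 by lia.
case=> [e|[e|[e|e]]]; try lia.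
Qed.

Lemma main_sec ps H : greedy_run L d ps -> hitting_set L H -> 5 * size ps <= 7 * size H.
Proof.
move=> hrun hH.
case: hrun => ps1 [ps2 [ps3 [-> h1 h2 [_ h3]]]].
rewrite !size_cat h3.
have e := phase1_inv h1.
have lb c := LBcls c hH.
have l2 := LB2 h1 hH.
rewrite partition_card in l2.
have inv := phase2_inv h1 h2.
have tm := termination h2.
have sp := special h1.
have -> : #|[set i | ~~ hit L (ps1 ++ ps2) i]| = #|U (ps1 ++ ps2)| by [].
rewrite partition_card.
have e0 := e o0; have e1 := e o1; have e2 := e o2.
have l0 := lb o0; have l1 := lb o1; have l3 := lb o2.
have t01 := tm o0 o1 isT; have t02 := tm o0 o2 isT; have t12 := tm o1 o2 isT.
have sp' : size ps1 = 1 -> F ps1 o0 = 1 -> F ps1 o1 = 1 -> F ps1 o2 = 1 -> 3 <= size H.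
  move=> a b c f; apply: (sp H) => //; rewrite partition_card -/(F _ _) -/(F _ _) -/(F _ _).
  by rewrite b c f.
apply: (fin (m0 := F ps1 o0) (m1 := F ps1 o1) (m2 := F ps1 o2)) => //.
- by rewrite addnC /F e0.
- by rewrite addnC /F e1.
- by rewrite addnC /F e2.
- move: inv t01 t02 t12; rewrite /G /gg /F.
  crunch.
Qed.

End Main.

Theorem mainTheorem4 (R : realFieldType) (n : nat) (d : 'I_3 -> R * R)
  (hd : forall a b : 'I_3, a != b -> non_parallel (d a) (d b))
  (L : 'I_n -> line R)
  (hL : forall i j : 'I_n,
          (forall p : point R, on_line (L i) p = on_line (L j) p) -> i = j)
  (hS : forall i : 'I_n, exists a : 'I_3, parallel_to (L i) (d a))
  (ps : seq (point R)) (hrun : greedy_run L d ps)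
  (H : seq (point R)) (hU : uniq H) (hH : hitting_set L H) :
  (5 * size ps <= 7 * size H)%N.
Proof. exact: (main_sec hd hL hS hrun hH). Qed.
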